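(* Let $n$ be a positive integer and $\lambda$ an infinite cardinal. For every $d$-feebly compact shift-continuous $T_1$-topology $\tau$ on the semilattice $\exp_n\lambda$, a point $x$ is isolated in $(\exp_n\lambda,\tau)$ if and only if $x\in\exp_n\lambda\setminus\exp_{n-1}\lambda$.
   Context: For a positive integer $n$ and a cardinal $\lambda$, $\exp_n\lambda=\{A\subseteq\lambda\colon |A|\leqslant n\}$, regarded as a semilattice under the operation $\cap$ (so $\exp_0\lambda=\{\varnothing\}$). A topology $\tau$ on a semilattice $S$ is shift-continuous if the semilattice operation is separately continuous, i.e. $(S,\tau)$ is a semitopological semilattice. A topological space is $d$-feebly compact if every discrete family of open subsets of it is finite. *)

(* Defs.v *)
From HB Require Import structures.
From mathcomp Require Import all_boot all_order.
From mathcomp Require Import finmap.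
From mathcomp Require Import boolp classical_sets cardinality.
Set Implicit Arguments. Unset Strict Implicit. Unset Printing Implicit Defensive.
Local Open Scope fset_scope.
Local Open Scope classical_set_scope.

(* exp_n L : subsets of L with at most n elements (L models the cardinal lambda) *)
Definition exp_n (L : choiceType) (n : nat) := {A : {fset L} | (#|` A| <= n)%N}.

Lemma exp_meet_subproof (L : choiceType) (n : nat) (A B : exp_n L n) :
  (#|` (fsetI (val A) (val B))| <= n)%N.
Proof.
apply: leq_trans (valP A); apply: fsubset_leq_card; exact: fsubsetIl.
Qed.

Definition exp_meet (L : choiceType) (n : nat) (A B : exp_n L n) : exp_n L n :=
  exist _ (fsetI (val A) (val B)) (exp_meet_subproof A B).

Definition is_topology (X : Type) (tau : set (set X)) : Prop :=
  [/\ tau setT,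
      (forall U V, tau U -> tau V -> tau (U `&` V)) &
      (forall (F : set (set X)), F `<=` tau -> tau (\bigcup_(U in F) U))].

Definition T1_topology (X : Type) (tau : set (set X)) : Prop :=
  forall x y : X, x <> y -> exists U, [/\ tau U, U x & ~ U y].

Definition tcontinuous (X : Type) (tau : set (set X)) (f : X -> X) : Prop :=
  forall U, tau U -> tau (f @^-1` U).

Definition shift_continuous (L : choiceType) (n : nat) (tau : set (set (exp_n L n))) :=
  forall a : exp_n L n,
    tcontinuous tau (fun x => exp_meet a x) /\ tcontinuous tau (fun x => exp_meet x a).

Definition discrete_family (X : Type) (tau : set (set X)) (F : set (set X)) : Prop :=
  forall x : X, exists U, [/\ tau U, U x &
    forall V W, F V -> F W -> V `&` U !=set0 -> W `&` U !=set0 -> V = W].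

Definition d_feebly_compact (X : Type) (tau : set (set X)) : Prop :=
  forall F : set (set X), F `<=` tau -> discrete_family tau F -> finite_set F.

Definition isolated (X : Type) (tau : set (set X)) (x : X) : Prop := tau [set x].

(* Main.v *)
Require Import Defs.
From HB Require Import structures.
From mathcomp Require Import all_boot all_order.
From mathcomp Require Import finmap.
From mathcomp Require Import boolp classical_sets cardinality functions.
From mathcomp Require Import zify.
Set Implicit Arguments. Unset Strict Implicit.
Local Open Scope fset_scope.
Local Open Scope classical_set_scope.

Section S.
Variables (L : choiceType) (n : nat) (tau : set (set (exp_n L n))).
Hypotheses (n0 : (0 < n)%N) (top : is_topology tau) (T1 : T1_topology tau)
  (sc : shift_continuous tau).

Lemma tauI U V : tau U -> tau V -> tau (U `&` V).
Proof. by case: top => _ H _; apply: H. Qed.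
Lemma tauT : tau setT.
Proof. by case: top. Qed.

Lemma tau_eq {U V} : tau U -> U = V -> tau V.
Proof. by move=> ? <-. Qed.

Definition e0 : exp_n L n := exist _ fset0 (leq0n n).
Lemma single_subproof (a : L) : (#|` [fset a]| <= n)%N.
Proof. by rewrite cardfs1. Qed.
Definition sgl (a : L) : exp_n L n := exist _ [fset a] (single_subproof a).

Lemma up1_open a : tau [set y : exp_n L n | a \in val y].
Proof.
have [|O [tO Oa Oe]] := @T1 (sgl a) e0.
  by move/(congr1 val)/fsetP/(_ a); rewrite !inE eqxx.
apply: (tau_eq ((sc (sgl a)).1 _ tO)).
apply/seteqP; split => y /=.
- case: (boolP (a \in val y)) => // ay.
  have -> : exp_meet (sgl a) y = e0.
    apply: val_inj => /=; apply/fsetP => b; rewrite !inE.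
    by apply/andP => -[/eqP -> ]; rewrite (negbTE ay).
  by [].
- move=> ay; have -> // : exp_meet (sgl a) y = sgl a.
  apply: val_inj => /=; apply/fsetP => b; rewrite !inE.
  by apply/andP/idP => [[]//|/eqP ->]; rewrite eqxx.
Qed.

Lemma upseq_open (s : seq L) : tau [set y : exp_n L n | all (fun a => a \in val y) s].
Proof.
elim: s => [|a s IH] /=.
  by apply: (tau_eq tauT); apply/seteqP; split.
apply: (tau_eq (tauI (up1_open a) IH)); apply/seteqP; split => y /=.
  by case=> -> ->.
by case/andP => -> ->.
Qed.

Lemma up_open (z : exp_n L n) : tau [set y | fsubset (val z) (val y)].
Proof.
apply: (tau_eq (upseq_open (val z))); apply/seteqP; split => y /=.
  by move/allP => H; apply/fsubsetP => b /H.
by move/fsubsetP => H; apply/allP => b /H.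
Qed.

Lemma full_open (z : exp_n L n) : #|` val z| = n -> tau [set z].
Proof.
move=> zn; apply: (tau_eq (up_open z)); apply/seteqP; split => y /=; last first.
  by move->.
move=> zy; apply: val_inj; apply/eqP; rewrite eq_sym eqEfcard zy zn /=.
exact: (valP y).
Qed.

Lemma blk i j k k' m : (k < m)%N -> (k' < m)%N -> (i*m+k = j*m+k')%N -> i = j.
Proof. move=> *; nia. Qed.

Lemma inf_inj (T : Type) (A : set T) : infinite_set A ->
  exists f : nat -> T, injective f /\ forall i, A (f i).
Proof.
move/infiniteP/card_leP => -[f].
exists (fun i => val (f (SigSub (mem_set (I : setT i))))); split; last first.
  move=> i; exact: (set_valP (f (SigSub (mem_set (I : setT i))))).
move=> i j /val_inj /(@inj _ _ _ f).
rewrite !inE => /(_ I I) /(congr1 val) //.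
Qed.

Lemma not_isolated (x : exp_n L n) : infinite_set [set: L] -> d_feebly_compact tau ->
  (#|` val x| < n)%N -> ~ tau [set x].
Proof.
move=> Linf dfc xn xo.
set m := (n - #|` val x|)%N.
have m0 : (0 < m)%N by rewrite /m subn_gt0.
have [f [finj fx]] := inf_inj (infinite_setD Linf (finite_fset (val x))).
have fnx i : f i \notin val x by have [_ /negP] := fx i.
pose A i := [fset f (i*m + val j)%N | j : 'I_m].
have Ainj i : injective (fun j : 'I_m => f (i*m + val j)%N).
  by move=> j k /finj /addnI /val_inj.
have cA i : #|` A i| = m.
  by rewrite card_imfset //= size_enum_ord.
have memA i b : b \in A i -> exists2 k, (k < m)%N & b = f (i*m + k)%N.
  rewrite /A => /imfsetP [j _ ->]; exists (val j); [exact: ltn_ord | by []].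
have cw i : #|` fsetU (val x) (A i)| = n.
  have := cardfsUI (val x) (A i).
  have -> : fsetI (val x) (A i) = fset0.
    apply/fsetP => b; rewrite !inE; apply/negbTE; apply/negP => /andP [bx /memA [k _ bk]].
    by move: bx; rewrite bk (negbTE (fnx _)).
  rewrite cardfs0 addn0 cA => ->.
  by rewrite /m subnKC // ltnW.
pose w i : exp_n L n := exist _ (fsetU (val x) (A i)) (eq_leq (cw i)).
have winj : injective w.
  move=> i j /(congr1 val) /= /fsetP /(_ (f (i*m)%N)).
  rewrite !inE (negbTE (fnx _)) /=.
  have -> : f (i*m)%N \in A i by apply/imfsetP; exists (Ordinal m0) => //=; rewrite addn0.
  move/esym/memA => [k km /finj].
  by rewrite -[X in X = _]addn0 => /blk; apply.
pose F := range (fun i => [set w i]).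
have : finite_set F.
  apply: dfc.
    by move=> _ [i _ <-]; apply: full_open; apply: cw.
  move=> z.
  case: (boolP (fsubset (val x) (val z))) => xz; last first.
    have neq : exp_meet x z <> x.
      by move/(congr1 val) => /= /fsetIidPl H; rewrite H in xz.
    have [O [tO Oxz nOx]] := T1 neq.
    exists ((fun y => exp_meet x y) @^-1` O); split => //.
    - exact: (sc x).1.
    - move=> V W [i _ <-] _ [y [/= -> Uy]] _; exfalso; apply: nOx.
      suff <- : exp_meet x (w i) = x by [].
      by apply: val_inj; apply/fsetIidPl; apply: fsubsetUl.
  case: (pselect (z = x)) => [->|zx].
    exists [set x]; split => //.
    move=> V W [i _ <-] _ [y [/= -> xy]] _; exfalso.
    have := congr1 (fun s => #|` val s|) xy => /=.
    by rewrite cw => E; rewrite -E ltnn in xn.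
  have : ~~ fsubset (val z) (val x).
    by apply/negP => zx'; apply: zx; apply: val_inj; apply/eqP; rewrite eqEfsubset zx' xz.
  case/fsubsetPn => b bz bx.
  exists [set y | fsubset (val z) (val y)]; split; [exact: up_open | exact: fsubset_refl |].
  move=> V W [i _ <-] [j _ <-] [y [/= -> zi]] [y' [/= -> zj]].
  have bA k : fsubset (val z) (val (w k)) -> b \in A k.
    by move/fsubsetP/(_ _ bz); rewrite /= inE (negbTE bx).
  have [k1 k1m E1] := memA _ _ (bA _ zi).
  have [k2 k2m E2] := memA _ _ (bA _ zj).
  by move: E1; rewrite E2 => /finj /esym /(blk k1m k2m) ->.
move=> /(finite_preimage (f:=fun i => [set w i])) H.
apply: infinite_nat; apply: (sub_finite_set _ (H _)).
- by move=> i _ /=; exists i.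
- move=> i j _ _ /= E; apply: winj.
  have : [set w j] (w i) by rewrite -E.
  by [].
Qed.

End S.

Theorem corollary6 (L : choiceType) (n : nat) (tau : set (set (exp_n L n))) :
  (0 < n)%N -> infinite_set [set: L] ->
  is_topology tau -> T1_topology tau -> shift_continuous tau ->
  d_feebly_compact tau ->
  forall x : exp_n L n, isolated tau x <-> #|` val x| = n.
Proof.
move=> n0 Linf top T1 sc dfc x; split.
  move=> xo; have := valP x; rewrite leq_eqVlt => /orP [/eqP //|xn].
  by case: (not_isolated n0 top T1 sc Linf dfc xn xo).
exact: full_open.
Qed.
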